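(* Let $\varphi\colon\Gamma\to K$ be a surjective homomorphism of discrete groups. Then for every $\mathbb{R}$-generated Banach $K$-module $V$, the restriction map $H^2_b(\varphi;V)\colon H^2_b(K;V)\to H^2_b(\Gamma;\varphi^{-1}V)$ is injective.
   Context: An $\mathbb{R}$-generated Banach $K$-module is one of the form $\ell^\infty(S,\mathbb{R})$ for a $K$-set $S$, with $(k\cdot f)(s)=f(k^{-1}s)$. $\varphi^{-1}V$ is $V$ with $\Gamma$ acting through $\varphi$, and the restriction map is induced by precomposition with $\varphi$ on bounded invariant cochains of the standard resolution. *)

(* Defs.v *)
From Stdlib Require Import Reals.
Open Scope R_scope.
Set Implicit Arguments.
Unset Strict Implicit.

Record Grp := {
  gT :> Type;
  gmul : gT -> gT -> gT;
  gone : gT;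
  ginv : gT -> gT;
  gmulA : forall x y z, gmul x (gmul y z) = gmul (gmul x y) z;
  gmul1 : forall x, gmul gone x = x;
  gmulV : forall x, gmul (ginv x) x = gone
}.

Record Hom (G H : Grp) := {
  hom :> G -> H;
  homM : forall x y, hom (@gmul G x y) = @gmul H (hom x) (hom y)
}.

Definition surj {A B : Type} (f : A -> B) := forall b, exists a, f a = b.

Definition is_action (G : Grp) (S : Type) (act : G -> S -> S) :=
  (forall s, act (@gone G) s = s) /\
  (forall g h s, act (@gmul G g h) s = act g (act h s)).

(** Cochains of the standard (homogeneous) resolution with values in
    V = l^oo(S,R): a degree-n cochain is a map G^(n+1) -> (S -> R).
    Boundedness is w.r.t. the sup norm ||c|| = sup_x sup_s |c x s|
    (which also forces every value to lie in l^oo(S,R)). *)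
Definition bounded1 (G : Grp) (S : Type) (c : G -> G -> S -> R) :=
  exists M, forall x0 x1 s, Rabs (c x0 x1 s) <= M.
Definition bounded2 (G : Grp) (S : Type) (c : G -> G -> G -> S -> R) :=
  exists M, forall x0 x1 x2 s, Rabs (c x0 x1 x2 s) <= M.

(** G-invariance: c (g x0, ..., g xn) = g . c (x0, ..., xn),
    where (g . v)(s) = v (g^-1 s). *)
Definition invariant1 (G : Grp) (S : Type) (act : G -> S -> S)
  (c : G -> G -> S -> R) :=
  forall g x0 x1 s, c (@gmul G g x0) (@gmul G g x1) s = c x0 x1 (act (@ginv G g) s).
Definition invariant2 (G : Grp) (S : Type) (act : G -> S -> S)
  (c : G -> G -> G -> S -> R) :=
  forall g x0 x1 x2 s,
    c (@gmul G g x0) (@gmul G g x1) (@gmul G g x2) s = c x0 x1 x2 (act (@ginv G g) s).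

Definition delta1 (G : Grp) (S : Type) (c : G -> G -> S -> R) :
  G -> G -> G -> S -> R :=
  fun x0 x1 x2 s => c x1 x2 s - c x0 x2 s + c x0 x1 s.
Definition delta2 (G : Grp) (S : Type) (c : G -> G -> G -> S -> R) :
  G -> G -> G -> G -> S -> R :=
  fun x0 x1 x2 x3 s => c x1 x2 x3 s - c x0 x2 x3 s + c x0 x1 x3 s - c x0 x1 x2 s.

(** Bounded invariant 2-cocycles: representatives of classes in H^2_b(G; V). *)
Definition bcocycle2 (G : Grp) (S : Type) (act : G -> S -> S)
  (f : G -> G -> G -> S -> R) :=
  bounded2 f /\ invariant2 act f /\
  (forall x0 x1 x2 x3 s, delta2 f x0 x1 x2 x3 s = 0).

Definition bcohomologous2 (G : Grp) (S : Type) (act : G -> S -> S)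
  (f g : G -> G -> G -> S -> R) :=
  exists c : G -> G -> S -> R, bounded1 c /\ invariant1 act c /\
    (forall x0 x1 x2 s, f x0 x1 x2 s - g x0 x1 x2 s = delta1 c x0 x1 x2 s).

Definition restr2 (Gam K : Grp) (phi : Hom Gam K) (S : Type)
  (f : K -> K -> K -> S -> R) : Gam -> Gam -> Gam -> S -> R :=
  fun x0 x1 x2 => f (phi x0) (phi x1) (phi x2).

(** The action of Gam on S through phi (the module phi^{-1} V). *)
Definition pull_act (Gam K : Grp) (phi : Hom Gam K) (S : Type)
  (act : K -> S -> S) : Gam -> S -> S :=
  fun g s => act (phi g) s.

(* Main.v *)
Require Import Defs.
From Stdlib Require Import Reals.
From Stdlib Require Import Lra ClassicalEpsilon.
Open Scope R_scope.

Section GrpLemmas.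
Variable G : Grp.
Lemma mulgV' (x : G) : gmul x (ginv x) = gone G.
Proof.
  rewrite <- (gmul1 (gmul x (ginv x))).
  rewrite <- (gmulV (ginv x)) at 1.
  rewrite <- gmulA. rewrite (gmulA (ginv x)). rewrite gmulV, gmul1.
  apply gmulV.
Qed.
Lemma mulg1 (x : G) : gmul x (gone G) = x.
Proof. rewrite <- (gmulV x), gmulA, mulgV'. apply gmul1. Qed.
Lemma inv_uniq (a b : G) : gmul a b = gone G -> a = ginv b.
Proof.
  intro H. rewrite <- (mulg1 a), <- (mulgV' b), gmulA, H. apply gmul1.
Qed.
Lemma inv1 : ginv (gone G) = gone G.
Proof. symmetry. apply inv_uniq. apply gmul1. Qed.
End GrpLemmas.

Lemma hom1 (G H : Grp) (phi : Hom G H) : phi (gone G) = gone H.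
Proof.
  assert (E : phi (gone G) = gmul (phi (gone G)) (phi (gone G))).
  { rewrite <- homM, gmul1. reflexivity. }
  rewrite <- (gmul1 (phi (gone G))) at 1.
  rewrite <- (gmulV (phi (gone G))) at 1.
  rewrite <- gmulA, <- E. apply gmulV.
Qed.
Lemma homV (G H : Grp) (phi : Hom G H) (x : G) : phi (ginv x) = ginv (phi x).
Proof. apply inv_uniq. rewrite <- homM, gmulV. apply hom1. Qed.

Fixpoint npow {G : Grp} (n : G) (j : nat) : G :=
  match j with O => gone G | S j => gmul (npow n j) n end.

Lemma arch (a B : R) : 0 < a -> exists j : nat, B < INR j * a.
Proof.
  intros Ha. destruct (INR_unbounded (B / a)) as [j Hj]. exists j.
  apply Rmult_lt_compat_r with (r := a) in Hj; [|lra].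
  replace (B / a * a) with B in Hj by (field; lra). lra.
Qed.

Theorem mainTheorem11 (Gam K : Grp) (phi : Hom Gam K) (Hsurj : surj phi)
  (S : Type) (act : K -> S -> S) (Hact : is_action act)
  (f g : K -> K -> K -> S -> R)
  (Hf : bcocycle2 act f) (Hg : bcocycle2 act g)
  (Hres : bcohomologous2 (pull_act phi act) (restr2 phi f) (restr2 phi g)) :
  bcohomologous2 act f g.
Proof.
  destruct Hres as [c [[Mc Hcb] [Hci Hcd]]].
  destruct Hf as [[Mf Hfb] [Hfi Hfd]].
  destruct Hg as [[Mg Hgb] [Hgi Hgd]].
  unfold invariant1, pull_act in Hci.
  unfold restr2, delta1 in Hcd.
  unfold delta2 in Hfd, Hgd. unfold invariant2 in Hfi, Hgi.
  set (e := gone Gam) in *.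
  set (eK := gone K) in *.
  assert (He : phi e = eK) by apply hom1.
  assert (Hdiag : forall x m s, phi m = eK ->
     c x (gmul x m) s = f (phi x) (phi x) (phi x) s - g (phi x) (phi x) (phi x) s).
  {
    assert (Hker : forall n s, phi n = eK -> c e n s = f eK eK eK s - g eK eK eK s).
    { set (p := fun n s => c e n s - (f eK eK eK s - g eK eK eK s)).
      assert (padd : forall n m s, phi n = eK -> phi m = eK ->
                p (gmul n m) s = p n s + p m s).
      { intros n m s Hn Hm. unfold p.
        pose proof (Hcd e n (gmul n m) s) as E.
        rewrite homM, He, Hn, Hm, gmul1 in E.
        pose proof (Hci n e m s) as E2. rewrite mulg1, homV, Hn in E2.
        unfold eK in E2. rewrite inv1 in E2. rewrite (proj1 Hact) in E2.
        fold eK in E2. lra. }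
      assert (p0 : forall s, p e s = 0).
      { intro s. pose proof (padd e e s He He) as E. unfold e in E at 1.
        rewrite gmul1 in E. fold e in E. lra. }
      assert (pw : forall n, phi n = eK -> forall j, phi (npow n j) = eK).
      { intros n Hn j; induction j; simpl. exact He.
        rewrite homM, IHj, Hn. apply gmul1. }
      assert (pj : forall n s j, phi n = eK -> p (npow n j) s = INR j * p n s).
      { intros n s j Hn. induction j. simpl. rewrite p0. lra.
        simpl npow. rewrite padd; auto. rewrite IHj, S_INR. lra. }
      assert (pb : forall n s, Rabs (p n s) <= Mc + (Mf + Mg)).
      { intros n s. unfold p. pose proof (Hcb e n s). pose proof (Hfb eK eK eK s).
        pose proof (Hgb eK eK eK s).
        pose proof (Rabs_triang (c e n s) (- (f eK eK eK s - g eK eK eK s))).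
        pose proof (Rabs_triang (f eK eK eK s) (- g eK eK eK s)).
        unfold Rminus in *. rewrite Rabs_Ropp in *. lra. }
      intros n s Hn.
      destruct (Req_dec (p n s) 0) as [Z|NZ]. unfold p in Z. lra.
      exfalso.
      destruct (arch (Rabs (p n s)) (Mc + (Mf + Mg))) as [j Hj].
      { apply Rabs_pos_lt. exact NZ. }
      pose proof (pb (npow n j) s) as B. rewrite pj in B; auto.
      rewrite Rabs_mult, Rabs_right in B. lra. apply Rle_ge, pos_INR. }
    intros x m s Hm.
    pose proof (Hci x e m s) as E. rewrite mulg1 in E. rewrite E.
    rewrite Hker by exact Hm.
    pose proof (Hfi (phi x) eK eK eK s) as F1.
    pose proof (Hgi (phi x) eK eK eK s) as G1.
    unfold eK in F1, G1 |- *. rewrite mulg1 in F1, G1.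
    rewrite F1, G1, homV. reflexivity. }
  assert (Hr : forall x0 x1 m s, phi m = eK -> c x0 (gmul x1 m) s = c x0 x1 s).
  { intros x0 x1 m s Hm.
    pose proof (Hcd x0 x1 (gmul x1 m) s) as E.
    rewrite homM, Hm in E. unfold eK in E. rewrite mulg1 in E.
    rewrite Hdiag in E by exact Hm.
    pose proof (Hfd (phi x0) (phi x1) (phi x1) (phi x1) s).
    pose proof (Hgd (phi x0) (phi x1) (phi x1) (phi x1) s). lra. }
  assert (Hl : forall x0 x1 n s, phi n = eK -> c (gmul x0 n) x1 s = c x0 x1 s).
  { intros x0 x1 n s Hn.
    pose proof (Hcd x0 (gmul x0 n) x1 s) as E.
    rewrite homM, Hn in E. unfold eK in E. rewrite mulg1 in E.
    rewrite Hdiag in E by exact Hn.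
    pose proof (Hfd (phi x0) (phi x0) (phi x0) (phi x1) s).
    pose proof (Hgd (phi x0) (phi x0) (phi x0) (phi x1) s). lra. }
  assert (Hdec : forall x y, phi x = phi y -> y = gmul x (gmul (ginv x) y) /\
                   phi (gmul (ginv x) y) = eK).
  { intros x y Hxy. split.
    - rewrite gmulA, mulgV'. symmetry. apply gmul1.
    - rewrite homM, homV, <- Hxy. apply gmulV. }
  assert (Hind : forall x y x' y' s, phi x = phi y -> phi x' = phi y' ->
             c x x' s = c y y' s).
  { intros x y x' y' s H1 H2.
    destruct (Hdec x y H1) as [E1 P1]. destruct (Hdec x' y' H2) as [E2 P2].
    rewrite E1, E2, Hl, Hr; auto. }
  pose (L := fun k => proj1_sig (constructive_indefinite_description _ (Hsurj k))).
  assert (HL : forall k, phi (L k) = k).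
  { intro k. unfold L. destruct (constructive_indefinite_description _ _). exact e0. }
  exists (fun a0 a1 s => c (L a0) (L a1) s). split; [|split].
  - exists Mc. intros. apply Hcb.
  - intros k a0 a1 s. simpl.
    rewrite (Hind (L (gmul k a0)) (gmul (L k) (L a0)) (L (gmul k a1)) (gmul (L k) (L a1))).
    + rewrite Hci, homV, HL. reflexivity.
    + rewrite homM, !HL. reflexivity.
    + rewrite homM, !HL. reflexivity.
  - intros a0 a1 a2 s. unfold delta1.
    pose proof (Hcd (L a0) (L a1) (L a2) s) as E. rewrite !HL in E. exact E.
Qed.
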